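(* For every $n\in\{2,6,10,\dots\}$, every increasing path of $f_n$ that starts at the origin and ends at a local maximum of $f_n$ has length at least $2^{n/4}$. Hence any local search algorithm (with any neighbor selection and tie-breaking rule) that starts at the origin and moves at each step to a neighbor with strictly larger value of $f_n$ takes at least $2^{n/4}$ steps to reach a local maximum; since $f_n$ has encoding size polynomial in $n$, this is exponential both in $n$ and in the size of $f_n$.
   Context: For $n\in\{2,6,10,\dots\}$ define polynomials $f_n$ in variables $x_1,\dots,x_n$ (evaluated on $\{0,1\}^n$) recursively. Set $f_2(x_1,x_2):=x_1+x_2$. For $n\in\{2,6,10,\dots\}$, write $\mathbf{x}=(x_1,\dots,x_n)$, $S:=\sum_{i=1}^n x_i$, let $M_n:=\max_{\{0,1\}^n} f_n-\min_{\{0,1\}^n} f_n+1$, and define $f_{n+4}(\mathbf{x},x_{n+1},x_{n+2},x_{n+3},x_{n+4}) := f_n(\mathbf{x}) - M_n n^2 x_{n+1} + M_n(n+1) S x_{n+1} - x_{n+2} - 2M_n n S x_{n+2} + 2M_n n(n+2) x_{n+1}x_{n+2} - 4 S x_{n+3} + 2x_{n+1}x_{n+3} + 2x_{n+2}x_{n+3} - 3x_{n+3} + (M_n(n-1)+4) S x_{n+4} + 6M_n n^2 x_{n+3}x_{n+4} - 5M_n n^2 x_{n+4}$. For a function $f:\{0,1\}^m\to\mathbb{R}$, an increasing path is a sequence of vertices $v_0,v_1,\dots,v_k$ of $\{0,1\}^m$ such that consecutive vertices differ in exactly one coordinate and $f(v_{j+1})>f(v_j)$ for all $j$; its length is $k$.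 A local maximum is a vertex no neighbor of which (vertex differing in exactly one coordinate) has strictly larger value. *)

(* Defs.v *)
From Stdlib Require Import ZArith List Reals.
Import ListNotations.
Local Open Scope Z_scope.

(* coordinate x_i (1-based), as 0/1 integer *)
Definition xc (v : list bool) (i : nat) : Z := if nth (i - 1)%nat v false then 1 else 0.

Definition sumx (v : list bool) (n : nat) : Z :=
  fold_right Z.add 0 (map (xc v) (seq 1 n)).

Fixpoint cube (n : nat) : list (list bool) :=
  match n with
  | O => [ [] ]
  | S m => map (cons false) (cube m) ++ map (cons true) (cube m)
  end.

Definition zmax_list (l : list Z) : Z :=
  match l with [] => 0 | a :: t => fold_left Z.max t a end.
Definition zmin_list (l : list Z) : Z :=
  match l with [] => 0 | a :: t => fold_left Z.min t a end.

Definition Mrange (g : list bool -> Z) (n : nat) : Z :=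
  zmax_list (map g (cube n)) - zmin_list (map g (cube n)) + 1.

(* fk k = f_{4k+2}; it reads only the first 4k+2 coordinates *)
Fixpoint fk (k : nat) : list bool -> Z :=
  match k with
  | O => fun v => xc v 1 + xc v 2
  | S k' =>
      let g := fk k' in
      let nn := (4 * k' + 2)%nat in
      let M := Mrange g nn in
      let n := Z.of_nat nn in
      fun v =>
        let S := sumx v nn in
        let a := xc v (nn + 1) in
        let b := xc v (nn + 2) in
        let c := xc v (nn + 3) in
        let d := xc v (nn + 4) in
        g v - M * n ^ 2 * a + M * (n + 1) * S * a - b - 2 * M * n * S * b
        + 2 * M * n * (n + 2) * a * b - 4 * S * c + 2 * a * c + 2 * b * c
        - 3 * c + (M * (n - 1) + 4) * S * d + 6 * M * n ^ 2 * c * d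
        - 5 * M * n ^ 2 * d
  end.

(* f_n for n in {2,6,10,...} *)
Definition f_n (n : nat) : list bool -> Z := fk (n / 4).

Fixpoint hdist (u v : list bool) : nat :=
  match u, v with
  | a :: u', b :: v' => ((if Bool.eqb a b then 0 else 1) + hdist u' v')%nat
  | _, _ => 0%nat
  end.

Definition adjacent (m : nat) (u v : list bool) : Prop :=
  length u = m /\ length v = m /\ hdist u v = 1%nat.

(* v0, vs = v0 v1 ... vk is an increasing path of g in {0,1}^m (length k = length vs) *)
Fixpoint incr_path_from (m : nat) (g : list bool -> Z) (v : list bool)
  (vs : list (list bool)) : Prop :=
  match vs with
  | [] => True
  | w :: vs' => adjacent m v w /\ g v < g w /\ incr_path_from m g w vs'
  end.

Definition is_local_max (m : nat) (g : list bool -> Z) (v : list bool) : Prop :=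
  length v = m /\ forall w, adjacent m v w -> ~ (g v < g w).

Definition origin (m : nat) : list bool := repeat false m.

(* Main.v *)
Require Import Defs.
From Stdlib Require Import ZArith List Reals.
From Stdlib Require Import Lia Psatz Bool.
Import ListNotations.

Module Aux.
Local Open Scope Z_scope.

Definition b2z (b : bool) : Z := if b then 1 else 0.
Fixpoint cntt (x : list bool) : Z :=
  match x with [] => 0 | b :: t => b2z b + cntt t end.




Lemma cntt_bounds x : 0 <= cntt x <= Z.of_nat (length x).
Proof. induction x as [|b t IH]; cbn [cntt length]; [lia|]. rewrite Nat2Z.inj_succ; destruct b; unfold b2z; lia. Qed.

Lemma cntt_app x y : cntt (x ++ y) = cntt x + cntt y.
Proof. induction x; simpl; lia. Qed.

Lemma sumx_gen v s N :
  fold_right Z.add 0 (map (xc v) (seq (S s) N)) = cntt (firstn N (skipn s v)).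
Proof.
  revert s. induction N as [|N IH]; intros s; [reflexivity|].
  cbn [seq map fold_right]. rewrite IH.
  assert (E1 : xc v (S s) = b2z (nth s v false)) by (unfold xc, b2z; simpl; rewrite Nat.sub_0_r; reflexivity).
  rewrite E1.
  assert (E2 : skipn (S s) v = skipn 1 (skipn s v)) by (rewrite skipn_skipn; f_equal; lia).
  rewrite E2.
  assert (E3 : nth s v false = nth 0 (skipn s v) false) by (rewrite nth_skipn; f_equal; lia).
  rewrite E3. destruct (skipn s v) as [|b l]; simpl.
  - rewrite firstn_nil. reflexivity.
  - reflexivity.
Qed.

Lemma sumx_cntt v N : sumx v N = cntt (firstn N v).
Proof. unfold sumx. rewrite (sumx_gen v 0 N). reflexivity. Qed.

Definition H (M n S a b c d : Z) : Z :=
  - M * n ^ 2 * a + M * (n + 1) * S * a - b - 2 * M * n * S * b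
        + 2 * M * n * (n + 2) * a * b - 4 * S * c + 2 * a * c + 2 * b * c
        - 3 * c + (M * (n - 1) + 4) * S * d + 6 * M * n ^ 2 * c * d
        - 5 * M * n ^ 2 * d.

Lemma fk_S k v : fk (S k) v =
  fk k v + H (Mrange (fk k) (4*k+2)) (Z.of_nat (4*k+2)) (sumx v (4*k+2))
    (xc v (4*k+2+1)) (xc v (4*k+2+2)) (xc v (4*k+2+3)) (xc v (4*k+2+4)).
Proof. cbn [fk]. cbv zeta. unfold H. ring. Qed.

Lemma xc_ext v w i : (forall j, (j < i)%nat -> nth j v false = nth j w false) ->
  (0 < i)%nat -> xc v i = xc w i.
Proof. intros Hx Hi. unfold xc. rewrite Hx by lia. reflexivity. Qed.

Lemma sumx_ext v w N : (forall j, (j < N)%nat -> nth j v false = nth j w false) ->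
  sumx v N = sumx w N.
Proof.
  intros Hx. unfold sumx. f_equal. apply map_ext_in. intros i Hi.
  apply in_seq in Hi. apply xc_ext; [|lia]. intros j Hj. apply Hx. lia.
Qed.

Lemma fk_local k v w : (forall j, (j < 4*k+2)%nat -> nth j v false = nth j w false) ->
  fk k v = fk k w.
Proof.
  revert v w. induction k as [|k IH]; intros v w Hx.
  - simpl. rewrite (xc_ext v w 1), (xc_ext v w 2); try lia; auto;
    intros j Hj; apply Hx; lia.
  - rewrite !fk_S. rewrite (IH v w) by (intros j Hj; apply Hx; lia).
    rewrite (sumx_ext v w) by (intros j Hj; apply Hx; lia).
    rewrite (xc_ext v w (4*k+2+1)), (xc_ext v w (4*k+2+2)), (xc_ext v w (4*k+2+3)),
      (xc_ext v w (4*k+2+4)); try lia; try reflexivity;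
    intros j Hj; apply Hx; lia.
Qed.

Lemma fk_app k x y : length x = (4*k+2)%nat -> fk k (x ++ y) = fk k x.
Proof.
  intros Hl. apply fk_local. intros j Hj. rewrite app_nth1 by lia. reflexivity.
Qed.

Lemma fk_S_app k x a b c d : length x = (4*k+2)%nat ->
  fk (S k) (x ++ [a;b;c;d]) =
  fk k x + H (Mrange (fk k) (4*k+2)) (Z.of_nat (4*k+2)) (cntt x) (b2z a) (b2z b) (b2z c) (b2z d).
Proof.
  intros Hl. rewrite fk_S, fk_app by assumption. rewrite sumx_cntt.
  rewrite <- Hl, firstn_app, Nat.sub_diag, firstn_all. simpl firstn. rewrite app_nil_r.
  unfold xc. rewrite Hl.
  replace (4*k+2+1-1)%nat with (length x + 0)%nat by lia.
  replace (4*k+2+2-1)%nat with (length x + 1)%nat by lia.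
  replace (4*k+2+3-1)%nat with (length x + 2)%nat by lia.
  replace (4*k+2+4-1)%nat with (length x + 3)%nat by lia.
  rewrite !app_nth2_plus. reflexivity.
Qed.

Lemma in_cube x : In x (cube (length x)).
Proof.
  induction x as [|b t IH]; simpl; [auto|]. apply in_or_app.
  destruct b; [right|left]; apply in_map; exact IH.
Qed.

Lemma fold_max_ge t h : forall z, (z = h \/ In z t) -> z <= fold_left Z.max t h.
Proof.
  revert h. induction t as [|a t IH]; intros h z Hz; simpl.
  - destruct Hz as [->|[]]; lia.
  - destruct Hz as [->|[->|Hz]].
    + assert (h <= Z.max h a) by lia. eapply Z.le_trans; [exact H0|]. apply IH; auto.
    + assert (z <= Z.max h z) by lia. eapply Z.le_trans; [exact H0|]. apply IH; auto.
    + apply IH; auto.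
Qed.

Lemma fold_min_le t h : forall z, (z = h \/ In z t) -> fold_left Z.min t h <= z.
Proof.
  revert h. induction t as [|a t IH]; intros h z Hz; simpl.
  - destruct Hz as [->|[]]; lia.
  - destruct Hz as [->|[->|Hz]].
    + assert (Z.min h a <= h) by lia. eapply Z.le_trans; [|exact H0]. apply IH; auto.
    + assert (Z.min h z <= z) by lia. eapply Z.le_trans; [|exact H0]. apply IH; auto.
    + apply IH; auto.
Qed.

Lemma zmax_ge l z : In z l -> z <= zmax_list l.
Proof. destruct l as [|h t]; [intros []|]. intros Hz. apply fold_max_ge. destruct Hz; auto. Qed.
Lemma zmin_le l z : In z l -> zmin_list l <= z.
Proof. destruct l as [|h t]; [intros []|]. intros Hz. apply fold_min_le. destruct Hz; auto. Qed.

Lemma Mrange_bound g N x y : length x = N -> length y = N ->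
  g x - g y <= Mrange g N - 1.
Proof.
  intros Hx Hy. unfold Mrange.
  assert (g x <= zmax_list (map g (cube N))).
  { apply zmax_ge. apply in_map. rewrite <- Hx. apply in_cube. }
  assert (zmin_list (map g (cube N)) <= g y).
  { apply zmin_le. apply in_map. rewrite <- Hy. apply in_cube. }
  lia.
Qed.

Lemma Mrange_pos g N : 1 <= Mrange g N.
Proof.
  pose proof (Mrange_bound g N (repeat false N) (repeat false N)).
  rewrite repeat_length in H0. specialize (H0 eq_refl eq_refl). lia.
Qed.

Lemma hdist_app x y p q : length x = length y ->
  hdist (x ++ p) (y ++ q) = (hdist x y + hdist p q)%nat.
Proof.
  revert y; induction x as [|a x IH]; intros [|b y] Hl; simpl in *; try lia.
  rewrite IH by lia. lia.
Qed.

Lemma hdist0 x y : length x = length y -> hdist x y = 0%nat -> x = y.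
Proof.
  revert y; induction x as [|a x IH]; intros [|b y] Hl Hd; simpl in *; try lia; auto.
  destruct a, b; simpl in Hd; try lia; f_equal; apply IH; lia.
Qed.

Lemma hdist1_cntt x y : length x = length y -> hdist x y = 1%nat ->
  cntt y = cntt x + 1 \/ cntt y = cntt x - 1.
Proof.
  revert y; induction x as [|a x IH]; intros [|b y] Hl Hd; simpl in *; try lia.
  destruct a, b; simpl in Hd; unfold b2z.
  - destruct (IH y) as [E|E]; lia.
  - assert (x = y) by (apply hdist0; lia). subst. lia.
  - assert (x = y) by (apply hdist0; lia). subst. lia.
  - destruct (IH y) as [E|E]; lia.
Qed.

Lemma adj_split N x q w : length x = N -> length q = 4%nat ->
  adjacent (N + 4) (x ++ q) w ->
  (exists y, w = y ++ q /\ adjacent N x y) \/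
  (exists q', w = x ++ q' /\ length q' = 4%nat /\ hdist q q' = 1%nat).
Proof.
  intros Hx Hq [_ [Hw Hd]].
  rewrite <- (firstn_skipn N w) in Hd |- *.
  assert (Hl1 : length (firstn N w) = N) by (rewrite length_firstn; lia).
  assert (Hl2 : length (skipn N w) = 4%nat) by (rewrite length_skipn; lia).
  rewrite hdist_app in Hd by lia.
  destruct (hdist x (firstn N w)) eqn:E.
  - right. exists (skipn N w). assert (x = firstn N w) by (apply hdist0; lia).
    subst x. repeat split; auto; lia.
  - left. exists (firstn N w). assert (q = skipn N w) by (apply hdist0; lia).
    subst q. repeat split; auto; lia.
Qed.

Lemma adj_cntt N x y : adjacent N x y -> cntt y = cntt x + 1 \/ cntt y = cntt x - 1.
Proof. intros [H1 [H2 H3]]. apply hdist1_cntt; lia. Qed.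

Lemma hdist_refl x : hdist x x = 0%nat.
Proof. induction x as [|a x IH]; simpl; auto. destruct a; simpl; auto. Qed.

Lemma exists_up x : cntt x < Z.of_nat (length x) ->
  exists y, length y = length x /\ hdist x y = 1%nat /\ cntt y = cntt x + 1.
Proof.
  induction x as [|a x IH]; intros Hc; cbn [cntt length] in *; [lia|].
  rewrite Nat2Z.inj_succ in Hc. pose proof (cntt_bounds x).
  destruct a.
  - unfold b2z in Hc. destruct IH as [y [H1 [H2 H3]]]; [lia|].
    exists (true :: y). cbn [cntt length hdist]. simpl Bool.eqb. repeat split; try lia; unfold b2z; lia.
  - exists (true :: x). cbn [cntt length hdist]. simpl Bool.eqb. rewrite hdist_refl. unfold b2z. repeat split; lia.
Qed.

Lemma exists_down x : 0 < cntt x ->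
  exists y, length y = length x /\ hdist x y = 1%nat /\ cntt y = cntt x - 1.
Proof.
  induction x as [|a x IH]; intros Hc; cbn [cntt length] in *; [lia|].
  destruct a.
  - exists (false :: x). cbn [cntt length hdist]. simpl Bool.eqb. rewrite hdist_refl. unfold b2z. repeat split; lia.
  - unfold b2z in Hc. destruct IH as [y [H1 [H2 H3]]]; [lia|].
    exists (false :: y). cbn [cntt length hdist]. simpl Bool.eqb. repeat split; try lia; unfold b2z; lia.
Qed.

Lemma cntt_zero x : cntt x = 0 -> x = repeat false (length x).
Proof.
  induction x as [|a x IH]; simpl; intros Hc; auto.
  pose proof (cntt_bounds x). destruct a; unfold b2z in Hc; [lia|]. f_equal. apply IH. lia.
Qed.

Lemma cntt_full x : cntt x = Z.of_nat (length x) -> x = repeat true (length x).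
Proof.
  induction x as [|a x IH]; cbn [cntt length repeat]; intros Hc; auto.
  pose proof (cntt_bounds x). rewrite Nat2Z.inj_succ in Hc.
  destruct a; unfold b2z in Hc; [|lia]. f_equal. apply IH. lia.
Qed.

Lemma cntt_repeat_true N : cntt (repeat true N) = Z.of_nat N.
Proof. induction N; cbn [cntt repeat]; [reflexivity|]. rewrite IHN. unfold b2z. lia. Qed.
Lemma cntt_repeat_false N : cntt (repeat false N) = 0.
Proof. induction N; cbn [cntt repeat]; [reflexivity|]. rewrite IHN. reflexivity. Qed.

Local Open Scope Z_scope.

Lemma last_cons_l {A} (w : A) vs u : last (w :: vs) u = last vs w.
Proof. revert w u; induction vs as [|a vs IH]; intros w u; [reflexivity|].
  change (last (a :: vs) u = last (a :: vs) w). rewrite !IH. reflexivity. Qed.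

Lemma last_map_l {A B} (h : A -> B) l d : last (map h l) (h d) = h (last l d).
Proof. revert d; induction l as [|a l IH]; intros d; [reflexivity|].
  rewrite map_cons, !last_cons_l. apply IH. Qed.

Lemma app_inj_len {A} (x y p q : list A) : length x = length y -> x ++ p = y ++ q -> p = q.
Proof. revert y; induction x as [|a x IH]; intros [|b y] Hl He; simpl in *; try lia; auto.
  inversion He. apply (IH y); auto. Qed.

Lemma adj_length N u w : adjacent N u w -> length u = N /\ length w = N.
Proof. intros [A [B _]]; auto. Qed.


Ltac use0 h := match goal with HM: 1 <= _, Hn : 2 <= _, HS : 0 <= _ <= _ |- _ => clear - h HM Hn HS end; revert h; cbn [b2z negb]; unfold H; nia.
Lemma LMlemma (M n S : Z) (a b c d : bool) : 1 <= M -> 2 <= n -> 0 <= S <= n ->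
  H M n S (b2z (negb a)) (b2z b) (b2z c) (b2z d) <= H M n S (b2z a) (b2z b) (b2z c) (b2z d) ->
  H M n S (b2z a) (b2z (negb b)) (b2z c) (b2z d) <= H M n S (b2z a) (b2z b) (b2z c) (b2z d) ->
  H M n S (b2z a) (b2z b) (b2z (negb c)) (b2z d) <= H M n S (b2z a) (b2z b) (b2z c) (b2z d) ->
  H M n S (b2z a) (b2z b) (b2z c) (b2z (negb d)) <= H M n S (b2z a) (b2z b) (b2z c) (b2z d) ->
  (S < n -> H M n (S+1) (b2z a) (b2z b) (b2z c) (b2z d) - H M n S (b2z a) (b2z b) (b2z c) (b2z d) <= M - 1) ->
  (0 < S -> H M n (S-1) (b2z a) (b2z b) (b2z c) (b2z d) - H M n S (b2z a) (b2z b) (b2z c) (b2z d) <= M - 1) ->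
  (a = false /\ b = false /\ c = false /\ d = false) \/ (a = true /\ b = true /\ c = true /\ d = true).
Proof.
  intros HM Hn HS H1 H2 H3 H4 H5 H6.
  destruct a, b, c, d; auto; exfalso.
  - use0 H4.
  - use0 H3.
  - destruct (Z.eq_dec S 0) as [E|E].
    + subst S. use0 H3.
    + specialize (H6 ltac:(lia)). use0 H6.
  - use0 H2.
  - use0 H2.
  - use0 H2.
  - use0 H2.
  - use0 H1.
  - use0 H1.
  - use0 H1.
  - use0 H1.
  - destruct (Z.eq_dec S n) as [E|E].
    + subst S. use0 H1.
    + specialize (H5 ltac:(lia)). use0 H5.
  - use0 H3.
  - use0 H3.
Qed.

Section Level.
Variable k : nat.
Local Notation N := (4*k+2)%nat.
Local Notation M := (Mrange (fk k) (4*k+2)).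
Local Notation n := (Z.of_nat (4*k+2)).
Local Notation g := (fk k).
Local Notation f := (fk (S k)).

Definition hq (S : Z) (q : list bool) : Z :=
  match q with [a;b;c;d] => H M n S (b2z a) (b2z b) (b2z c) (b2z d) | _ => 0 end.

Ltac use h := match goal with HM: 1 <= _, Hn : 2 <= _, HS : 0 <= _ <= _ |- _ =>
  clear - h HM Hn HS; revert h HM Hn HS end; cbn [hq b2z negb]; unfold H; intros; nia.

Lemma f_eq x q : length x = N -> length q = 4%nat -> f (x ++ q) = g x + hq (cntt x) q.
Proof.
  intros Hx Hq. destruct q as [|a [|b [|c [|d [|e q]]]]]; simpl in Hq; try lia.
  rewrite fk_S_app by exact Hx. unfold hq. reflexivity.
Qed.

Lemma hq_eq S a b c d : hq S [a;b;c;d] = H M n S (b2z a) (b2z b) (b2z c) (b2z d).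
Proof. reflexivity. Qed.

Lemma HMpos : 1 <= M. Proof. apply Mrange_pos. Qed.
Lemma Hnpos : 2 <= n. Proof. lia. Qed.

Lemma step x q w : length x = N -> length q = 4%nat -> adjacent (N + 4) (x ++ q) w ->
  f (x ++ q) < f w ->
  (exists y, w = y ++ q /\ adjacent N x y /\ g x + hq (cntt x) q < g y + hq (cntt y) q) \/
  (exists q', w = x ++ q' /\ length q' = 4%nat /\ hdist q q' = 1%nat /\ hq (cntt x) q < hq (cntt x) q').
Proof.
  intros Hx Hq Ha Hlt. destruct (adj_split N x q w Hx Hq Ha) as [[y [-> Hy]]|[q' [-> [Hq' Hd]]]].
  - left. exists y. destruct Hy as [H1 [H2 H3]].
    rewrite !f_eq in Hlt by auto. repeat split; auto.
  - right. exists q'. rewrite !f_eq in Hlt by auto. repeat split; auto. lia.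
Qed.

Lemma xmove x y q : adjacent N x y -> g x + hq (cntt x) q < g y + hq (cntt y) q ->
  hq (cntt x) q - hq (cntt y) q <= M - 1.
Proof.
  intros [H1 [H2 _]] Hlt. pose proof (Mrange_bound g N y x H2 H1). lia.
Qed.

Lemma cntt_N x : length x = N -> 0 <= cntt x <= n.
Proof. intros Hx. pose proof (cntt_bounds x) as B. rewrite Hx in B. exact B. Qed.

Ltac destr_q q' Hq' Hd :=
  destruct q' as [|a' [|b' [|c' [|d' [|e' q']]]]]; cbn [length] in Hq'; try lia;
  destruct a', b', c', d'; cbn [hdist Bool.eqb Nat.add] in Hd; try lia.

Definition q1111 := [true;true;true;true].

Lemma ph1111 vs x : length x = N -> incr_path_from (N+4) f (x ++ q1111) vs ->
  exists ys, vs = map (fun y => y ++ q1111) ys /\ incr_path_from N g x ys.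
Proof.
  revert x; induction vs as [|w vs IH]; intros x Hx Hp.
  - exists []. simpl. auto.
  - destruct Hp as [Ha [Hlt Hp]].
    pose proof HMpos as HM. pose proof Hnpos as Hn. pose proof (cntt_N x Hx) as HS.
    destruct (step x q1111 w Hx eq_refl Ha Hlt) as [[y [-> [Hy Hl]]]|[q' [-> [Hq' [Hd h]]]]].
    + destruct (IH y) as [ys [-> Hys]]; [apply (adj_length _ _ _ Hy)|exact Hp|].
      exists (y :: ys). split; [reflexivity|]. cbn [incr_path_from].
      split; [exact Hy|split; [|exact Hys]].
      assert (E : hq (cntt x) q1111 = hq (cntt y) q1111) by (cbn [hq q1111]; unfold H; ring).
      lia.
    + exfalso. unfold q1111 in *. destr_q q' Hq' Hd; use h.
Qed.

Definition q1000 := [true;false;false;false].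
Definition q1100 := [true;true;false;false].
Definition q1110 := [true;true;true;false].
Definition q0000 := [false;false;false;false].

Definition Mid (u : list bool) : Prop :=
  u = repeat true N ++ q1000 \/ (exists x, length x = N /\ u = x ++ q1100) \/
  u = repeat false N ++ q1110.

Lemma ones4 : repeat true (N + 4) = repeat true N ++ q1111.
Proof. rewrite repeat_app. reflexivity. Qed.

Lemma mid_lemma vs : forall u, Mid u -> incr_path_from (N+4) f u vs ->
  last vs u = repeat true (N + 4) ->
  exists vs', incr_path_from (N+4) f (repeat false N ++ q1111) vs' /\
    (length vs' < length vs)%nat /\ last vs' (repeat false N ++ q1111) = last vs u.
Proof.
  induction vs as [|w vs IH]; intros u Hu Hp Hl.
  - exfalso. cbn [last] in Hl. rewrite ones4 in Hl.
    destruct Hu as [->|[[x [Hx ->]]| ->]];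
    apply app_inj_len in Hl; rewrite ?repeat_length; auto; discriminate.
  - destruct Hp as [Ha [Hlt Hp]]. rewrite last_cons_l in Hl |- *.
    pose proof HMpos as HM. pose proof Hnpos as Hn.
    destruct Hu as [->|[[x [Hx ->]]| ->]].
    + pose proof (cntt_N (repeat true N) (repeat_length _ _)) as HS.
      destruct (step _ q1000 w (repeat_length _ _) eq_refl Ha Hlt) as [[y [-> [Hy Hl2]]]|[q' [-> [Hq' [Hd h]]]]].
      * exfalso. apply xmove in Hl2; [|exact Hy]. pose proof (adj_cntt _ _ _ Hy) as Ey.
        pose proof (cntt_N y (proj2 (adj_length _ _ _ Hy))) as HSy.
        rewrite cntt_repeat_true in *.
        destruct Ey as [Ey|Ey]; [lia|]. rewrite Ey in Hl2. unfold q1000 in Hl2. use Hl2.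
      * rewrite cntt_repeat_true in h, HS. unfold q1000 in *. destr_q q' Hq' Hd; [ | exfalso; use h | exfalso; use h | exfalso; use h].
        destruct (IH (repeat true N ++ q1100)) as [vs' [H1 [H2 H3]]]; auto.
        { right; left. exists (repeat true N). rewrite repeat_length. auto. }
        exists vs'. split; [exact H1|split; [cbn [length]; lia|exact H3]].
    + pose proof (cntt_N x Hx) as HS.
      destruct (step x q1100 w Hx eq_refl Ha Hlt) as [[y [-> [Hy Hl2]]]|[q' [-> [Hq' [Hd h]]]]].
      * pose proof (adj_cntt _ _ _ Hy) as Ey. apply xmove in Hl2; [|exact Hy].
        destruct Ey as [Ey|Ey].
        -- exfalso. rewrite Ey in Hl2. unfold q1100 in Hl2. use Hl2.
        -- destruct (IH (y ++ q1100)) as [vs' [H1 [H2 H3]]]; auto.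
           { right; left. exists y. split; auto. apply (adj_length _ _ _ Hy). }
           exists vs'. split; [exact H1|split; [cbn [length]; lia|exact H3]].
      * unfold q1100 in *. destr_q q' Hq' Hd; [ | exfalso; use h | exfalso; use h | exfalso; use h].
        assert (E : cntt x = 0) by use h.
        apply cntt_zero in E. rewrite Hx in E. rewrite E in *.
        destruct (IH (repeat false N ++ q1110)) as [vs' [H1 [H2 H3]]]; auto.
        { right; right. reflexivity. }
        exists vs'. split; [exact H1|split; [cbn [length]; lia|exact H3]].
    + pose proof (cntt_N (repeat false N) (repeat_length _ _)) as HS.
      destruct (step _ q1110 w (repeat_length _ _) eq_refl Ha Hlt) as [[y [-> [Hy Hl2]]]|[q' [-> [Hq' [Hd h]]]]].
      * exfalso. apply xmove in Hl2; [|exact Hy]. pose proof (adj_cntt _ _ _ Hy) as Ey.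
        pose proof (cntt_N y (proj2 (adj_length _ _ _ Hy))) as HSy.
        rewrite cntt_repeat_false in *.
        destruct Ey as [Ey|Ey]; [|lia]. rewrite Ey in Hl2. unfold q1110 in Hl2. use Hl2.
      * rewrite cntt_repeat_false in h, HS. unfold q1110 in *. destr_q q' Hq' Hd; [ | exfalso; use h | exfalso; use h | exfalso; use h].
        exists vs. repeat split; auto.
Qed.

Lemma ph0 vs : forall x, length x = N -> incr_path_from (N+4) f (x ++ q0000) vs ->
  last vs (x ++ q0000) = repeat true (N + 4) ->
  exists ys vs2, incr_path_from N g x ys /\ last ys x = repeat true N /\
    incr_path_from (N+4) f (repeat false N ++ q1111) vs2 /\
    (length ys + length vs2 < length vs)%nat /\
    last vs2 (repeat false N ++ q1111) = repeat true (N + 4).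
Proof.
  induction vs as [|w vs IH]; intros x Hx Hp Hl.
  - exfalso. cbn [last] in Hl. rewrite ones4 in Hl.
    apply app_inj_len in Hl; [discriminate|]. rewrite repeat_length; auto.
  - destruct Hp as [Ha [Hlt Hp]]. rewrite last_cons_l in Hl.
    pose proof HMpos as HM. pose proof Hnpos as Hn. pose proof (cntt_N x Hx) as HS.
    destruct (step x q0000 w Hx eq_refl Ha Hlt) as [[y [-> [Hy Hl2]]]|[q' [-> [Hq' [Hd h]]]]].
    + assert (E : hq (cntt x) q0000 = hq (cntt y) q0000) by (cbn [hq q0000]; unfold H; ring).
      destruct (IH y) as [ys [vs2 [H1 [H2 [H3 [H4 H5]]]]]]; auto.
      { apply (adj_length _ _ _ Hy). }
      exists (y :: ys), vs2. split; [|split; [|split; [exact H3|split; [|exact H5]]]].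
      * cbn [incr_path_from]. split; [exact Hy|split; [lia|exact H1]].
      * rewrite last_cons_l. exact H2.
      * cbn [length]. lia.
    + unfold q0000 in *. destr_q q' Hq' Hd; [ | exfalso; use h | exfalso; use h | exfalso; use h].
      assert (E : cntt x = n) by use h.
      rewrite <- Hx in E. apply cntt_full in E. rewrite Hx in E. rewrite E in *.
      destruct (mid_lemma vs (repeat true N ++ q1000)) as [vs' [H1 [H2 H3]]]; auto.
      { left. reflexivity. }
      exists [], vs'. split; [exact I|split; [reflexivity|split; [exact H1|split]]].
      * cbn [length]. lia.
      * rewrite H3. exact Hl.
Qed.

Lemma B_step L :
  (forall vs, incr_path_from N g (origin N) vs -> last vs (origin N) = repeat true N -> (L <= length vs)%nat) ->
  forall vs, incr_path_from (N+4) f (origin (N+4)) vs -> last vs (origin (N+4)) = repeat true (N+4) ->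
  (2 * L <= length vs)%nat.
Proof.
  intros IHB vs Hp Hl. unfold origin in Hp, Hl. rewrite repeat_app in Hp, Hl.
  destruct (ph0 vs (repeat false N) (repeat_length _ _) Hp Hl) as [ys [vs2 [H1 [H2 [H3 [H4 H5]]]]]].
  pose proof (IHB ys H1 H2) as L1.
  destruct (ph1111 vs2 (repeat false N) (repeat_length _ _) H3) as [ys2 [E2 H6]].
  subst vs2. rewrite length_map in H4.
  assert (L2 : (L <= length ys2)%nat).
  { apply IHB; [exact H6|]. rewrite (last_map_l (fun y => y ++ q1111)) in H5.
    rewrite ones4 in H5. apply app_inv_tail in H5. exact H5. }
  lia.
Qed.

Lemma A_step :
  (forall v, is_local_max N g v -> v = repeat true N) ->
  forall v, is_local_max (N+4) f v -> v = repeat true (N+4).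
Proof.
  intros IHA v [Hlv Hmax].
  pose proof HMpos as HM. pose proof Hnpos as Hn.
  set (x := firstn N v). set (q := skipn N v).
  assert (Hv : v = x ++ q) by (symmetry; apply firstn_skipn).
  assert (Hx : length x = N) by (unfold x; rewrite length_firstn; lia).
  assert (Hq : length q = 4%nat) by (unfold q; rewrite length_skipn; lia).
  clearbody x q. subst v.
  pose proof (cntt_N x Hx) as HS.
  assert (Hflip : forall q', length q' = 4%nat -> hdist q q' = 1%nat -> hq (cntt x) q' <= hq (cntt x) q).
  { intros q' Hq' Hd. destruct (Z_lt_le_dec (hq (cntt x) q) (hq (cntt x) q')) as [Hc|Hc]; [|exact Hc].
    exfalso. apply (Hmax (x ++ q')).
    - split; [exact Hlv|split; [rewrite length_app; lia|]]. rewrite hdist_app by reflexivity.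
      rewrite hdist_refl. exact Hd.
    - rewrite !f_eq by auto. lia. }
  assert (Hxm : forall y, adjacent N x y -> g y + hq (cntt y) q <= g x + hq (cntt x) q).
  { intros y Hy. destruct (Z_lt_le_dec (g x + hq (cntt x) q) (g y + hq (cntt y) q)) as [Hc|Hc]; [|exact Hc].
    exfalso. destruct Hy as [Hy1 [Hy2 Hy3]]. apply (Hmax (y ++ q)).
    - split; [exact Hlv|split; [rewrite length_app; lia|]]. rewrite hdist_app by lia.
      rewrite hdist_refl. lia.
    - rewrite !f_eq by auto. lia. }
  assert (Hxm2 : forall y, adjacent N x y -> hq (cntt y) q - hq (cntt x) q <= M - 1).
  { intros y Hy. pose proof (Hxm y Hy). destruct Hy as [Hy1 [Hy2 _]].
    pose proof (Mrange_bound g N x y Hy1 Hy2). lia. }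
  assert (Hup : cntt x < n -> exists y, adjacent N x y /\ cntt y = cntt x + 1).
  { intros Hc. rewrite <- Hx in Hc. destruct (exists_up x Hc) as [y [H1 [H2 H3]]].
    exists y. split; [split; [auto|split; [lia|auto]]|auto]. }
  assert (Hdn : 0 < cntt x -> exists y, adjacent N x y /\ cntt y = cntt x - 1).
  { intros Hc. destruct (exists_down x Hc) as [y [H1 [H2 H3]]].
    exists y. split; [split; [auto|split; [lia|auto]]|auto]. }
  destruct q as [|a [|b [|c [|d [|e q]]]]]; cbn [length] in Hq; try lia.
  assert (Hq4 : forall a b c d : bool, length [a;b;c;d] = 4%nat) by reflexivity.
  assert (P1 : hq (cntt x) [negb a;b;c;d] <= hq (cntt x) [a;b;c;d])
    by (apply Hflip; [reflexivity|destruct a, b, c, d; reflexivity]).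
  assert (P2 : hq (cntt x) [a;negb b;c;d] <= hq (cntt x) [a;b;c;d])
    by (apply Hflip; [reflexivity|destruct a, b, c, d; reflexivity]).
  assert (P3 : hq (cntt x) [a;b;negb c;d] <= hq (cntt x) [a;b;c;d])
    by (apply Hflip; [reflexivity|destruct a, b, c, d; reflexivity]).
  assert (P4 : hq (cntt x) [a;b;c;negb d] <= hq (cntt x) [a;b;c;d])
    by (apply Hflip; [reflexivity|destruct a, b, c, d; reflexivity]).
  assert (P5 : cntt x < n -> hq (cntt x + 1) [a;b;c;d] - hq (cntt x) [a;b;c;d] <= M - 1).
  { intros Hc. destruct (Hup Hc) as [y [Hy Ey]]. pose proof (Hxm2 y Hy) as E. rewrite Ey in E. exact E. }
  assert (P6 : 0 < cntt x -> hq (cntt x - 1) [a;b;c;d] - hq (cntt x) [a;b;c;d] <= M - 1).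
  { intros Hc. destruct (Hdn Hc) as [y [Hy Ey]]. pose proof (Hxm2 y Hy) as E. rewrite Ey in E. exact E. }
  rewrite !hq_eq in P1, P2, P3, P4, P5, P6.
  destruct (LMlemma _ _ _ a b c d HM Hn HS P1 P2 P3 P4 P5 P6)
    as [[-> [-> [-> ->]]]|[-> [-> [-> ->]]]].
  - exfalso.
    assert (Hxl : is_local_max N g x).
    { split; [exact Hx|]. intros y Hy Hc. pose proof (Hxm y Hy) as Hz.
      assert (Ez : hq (cntt y) q0000 = hq (cntt x) q0000) by (cbn [hq q0000]; unfold H; ring).
      unfold q0000 in Ez. lia. }
    apply IHA in Hxl. subst x.
    pose proof (Hflip [true;false;false;false] eq_refl eq_refl) as h.
    rewrite cntt_repeat_true in h, HS. use h.
  -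
    assert (Hxl : is_local_max N g x).
    { split; [exact Hx|]. intros y Hy Hc. pose proof (Hxm y Hy) as Hz.
      assert (Ez : hq (cntt y) q1111 = hq (cntt x) q1111) by (cbn [hq q1111]; unfold H; ring).
      unfold q1111 in Ez. lia. }
    apply IHA in Hxl. rewrite Hxl. exact (eq_sym ones4).
Qed.
End Level.

End Aux.
Import Aux.

Lemma A0 : forall v, is_local_max (4*0+2) (fk 0) v -> v = repeat true (4*0+2).
Proof.
  intros v [Hl Hmax]. destruct v as [|a [|b [|c v]]]; simpl in Hl; try lia.
  destruct a, b.
  - reflexivity.
  - exfalso. apply (Hmax [true;true]); [repeat split; reflexivity|]. cbv. reflexivity.
  - exfalso. apply (Hmax [true;true]); [repeat split; reflexivity|]. cbv. reflexivity.
  - exfalso. apply (Hmax [true;false]); [repeat split; reflexivity|]. cbv. reflexivity.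
Qed.

Lemma B0 : forall vs, incr_path_from (4*0+2) (fk 0) (origin (4*0+2)) vs ->
  last vs (origin (4*0+2)) = repeat true (4*0+2) -> (2 ^ 1 <= length vs)%nat.
Proof.
  intros vs Hp Hl. destruct vs as [|w [|w2 vs]].
  - cbv in Hl. discriminate.
  - simpl in Hl. subst w. destruct Hp as [[_ [_ Hd]] _]. cbv in Hd. discriminate.
  - simpl. lia.
Qed.

Lemma levels : forall k,
  (forall v, is_local_max (4*k+2) (fk k) v -> v = repeat true (4*k+2)) /\
  (forall vs, incr_path_from (4*k+2) (fk k) (origin (4*k+2)) vs ->
     last vs (origin (4*k+2)) = repeat true (4*k+2) -> (2 ^ (S k) <= length vs)%nat).
Proof.
  induction k as [|k [IHA IHB]].
  - split; [exact A0|exact B0].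
  - replace (4 * S k + 2)%nat with (4*k+2+4)%nat by lia. split.
    + exact (A_step k IHA).
    + intros vs Hp Hl. pose proof (B_step k _ IHB vs Hp Hl) as HB. rewrite Nat.pow_succ_r'. exact HB.
Qed.

Theorem theorem1 :
  forall (n : nat) (vs : list (list bool)),
    (2 <= n)%nat -> (n mod 4 = 2)%nat ->
    incr_path_from n (f_n n) (origin n) vs ->
    is_local_max n (f_n n) (last vs (origin n)) ->
    (Rpower 2 (INR n / 4) <= INR (length vs))%R.
Proof.
  intros n vs H2 Hm Hp Hlm. unfold f_n in *.
  remember (n / 4)%nat as k.
  assert (En : n = (4*k+2)%nat) by (subst k; pose proof (Nat.div_mod n 4); lia).
  subst n. destruct (levels k) as [LA LB].
  apply LA in Hlm. pose proof (LB vs Hp Hlm) as L.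
  apply le_INR in L. rewrite pow_INR in L. simpl (INR 2) in L.
  rewrite <- Rpower_pow in L by lra.
  eapply Rle_trans; [|exact L].
  apply Rle_Rpower; [lra|].
  rewrite plus_INR, mult_INR, !S_INR. simpl INR. pose proof (pos_INR k). lra.
Qed.
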